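(* Let $n$ be an odd integer, $q=2^n$, and let $i$ be a positive integer with $\gcd(i,n)=1$. Let $d$ be an integer with $d\equiv\frac{2^i+1}{3}\pmod{2^n-1}$, i.e. $3d\equiv 2^i+1\pmod{2^n-1}$. Then for every $u\in\mathrm{GF}(q)\setminus\mathrm{GF}(2)$ the cubic equation \[\big(u^dx+(1+u)^d\big)^3+x^3+1=0\] has a unique solution $x\in\mathrm{GF}(2^n)$.
   Context: Since $n$ is odd, $\gcd(3,2^n-1)=1$, so $\frac{2^i+1}{3}$ denotes $(2^i+1)$ times the inverse of $3$ modulo $2^n-1$. *)

(* Defs.v *)
(* GF(2^n) is modelled as an arbitrary finite field F with #|F| = 2^n. *)
From mathcomp Require Import all_boot all_order all_algebra all_field.

(* Main.v *)
Require Import Defs.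
From mathcomp Require Import all_boot all_order all_algebra all_field.
From mathcomp Require Import ring zify.
Import GRing.Theory.
Local Open Scope ring_scope.

Section Aux.
Variable F : fieldType.
Hypothesis h2 : (2%:R : F) = 0.

Lemma addxx (x : F) : x + x = 0.
Proof. by rewrite -mulr2n -mulr_natr h2 mulr0. Qed.

Lemma oppE (x : F) : - x = x.
Proof. by apply/eqP; rewrite eq_sym -addr_eq0 addxx. Qed.

Lemma frob2 (x y : F) : (x + y) ^+ 2 = x ^+ 2 + y ^+ 2.
Proof.
have -> : (x + y) ^+ 2 = x ^+ 2 + y ^+ 2 + 2%:R * (x * y) by ring.
by rewrite h2 mul0r addr0.
Qed.

Lemma frobn (x y : F) j : (x + y) ^+ (2 ^ j) = x ^+ (2 ^ j) + y ^+ (2 ^ j).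
Proof.
elim: j => [|j IH]; first by rewrite !expr1.
by rewrite expnSr !exprM IH frob2.
Qed.

Lemma cubicL (m3 : nat) (hc : forall x : F, (x ^+ 3) ^+ m3 = x) (c e W : F) :
  c != 0 -> e != 0 -> W ^+ 2 + e * W + c ^+ 3 = 0 ->
  (exists z, z ^+ 3 + c * z + e = 0) /\
  (forall z1 z2, z1 ^+ 3 + c * z1 + e = 0 -> z2 ^+ 3 + c * z2 + e = 0 -> z1 = z2).
Proof.
move=> c0 e0 hW.
have cinj : forall x y : F, x ^+ 3 = y ^+ 3 -> x = y.
  by move=> x y h; rewrite -(hc x) -(hc y) h.
have W0 : W != 0.
  apply: contraNneq c0 => W0; move: hW; rewrite W0 expr0n mulr0 !add0r.
  by move/eqP; rewrite expf_eq0 => /andP [_ /eqP ->].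
split.
  pose w := W ^+ m3.
  have hw : w ^+ 3 = W by rewrite /w -exprM mulnC exprM hc.
  have w0 : w != 0 by apply: contraNneq W0 => w0; rewrite -hw w0 expr0n.
  clearbody w.
  exists (w + c / w).
  have -> : (w + c / w) ^+ 3 + c * (w + c / w) =
     w ^+ 3 + c ^+ 3 / w ^+ 3 + 2%:R * (2%:R * c * w + 2%:R * c ^+ 2 / w).
    by field; exact: w0.
  rewrite h2 mul0r addr0 hw.
  apply: (mulIf W0); rewrite mul0r -hW; field; exact: W0.
move=> z1 z2 h1 h1'.
apply/eqP; apply: contraT => hne.
have hs : z1 + z2 != 0 by rewrite -[z2]oppE subr_eq0.
have hcs : z1 ^+ 2 + z1 * z2 + z2 ^+ 2 + c = 0.
  have : (z1 + z2) * (z1 ^+ 2 + z1 * z2 + z2 ^+ 2 + c) =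
     (z1 ^+ 3 + c * z1 + e) + (z2 ^+ 3 + c * z2 + e)
     + 2%:R * (z1 ^+ 2 * z2 + z1 * z2 ^+ 2 - e) by ring.
  rewrite h1 h1' h2 mul0r !addr0 => /eqP; rewrite mulf_eq0 (negbTE hs) /=.
  by move/eqP.
have hc' : c = - (z1 ^+ 2 + z1 * z2 + z2 ^+ 2).
  by apply: (addIr (z1 ^+ 2 + z1 * z2 + z2 ^+ 2)); rewrite addNr addrC hcs.
have he : e = - (z1 ^+ 3 + c * z1).
  by apply: (addrI (z1 ^+ 3 + c * z1)); rewrite subrr h1.
have he2 : e = z1 ^+ 2 * z2 + z1 * z2 ^+ 2 by rewrite he hc'; ring.
pose V := W + (z1 ^+ 3 + z2 ^+ 3 + z1 * z2 ^+ 2).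
have hV : V ^+ 2 + e * V + e ^+ 2 = 0.
  have -> : V ^+ 2 + e * V + e ^+ 2 = (W ^+ 2 + e * W + c ^+ 3) + 2%:R *
   (z2^+6 + 3%:R*z1*z2^+5 + 5%:R*z1^+2*z2^+4 + 6%:R*z1^+3*z2^+3 + 5%:R*z1^+4*z2^+2
    + 2%:R*z1^+5*z2 + z1^+6 + W*z2^+3 + W*z1*z2^+2 + W*z1^+3).
    by rewrite /V he2 hc'; ring.
  by rewrite hW h2 mul0r addr0.
pose t := V / e.
have ht : t ^+ 2 + t + 1 = 0.
  have -> : t ^+ 2 + t + 1 = (V ^+ 2 + e * V + e ^+ 2) / e ^+ 2 by rewrite /t; field; exact: e0.
  by rewrite hV mul0r.
have ht3 : t ^+ 3 = 1 ^+ 3.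
  apply/eqP; rewrite -subr_eq0.
  have -> : t ^+ 3 - 1 ^+ 3 = (t - 1) * (t ^+ 2 + t + 1) by ring.
  by rewrite ht mulr0.
have t1 := cinj _ _ ht3.
move: ht; rewrite t1 expr1n -[1 + 1]/(1 *+ 2) -mulr_natr mul1r h2 add0r.
by move/eqP; rewrite oner_eq0.
Qed.

End Aux.
Arguments addxx {F} h2 x.
Arguments oppE {F} h2 x.
Arguments frobn {F} h2 x y j.
Arguments cubicL {F} h2 [m3] hc [c e W].

Lemma fixL (F : finFieldType) n (hF : #|F| = (2 ^ n)%N) (u : F) j :
  coprime j n -> u ^+ (2 ^ j) = u -> u ^+ 2 = u.
Proof.
move=> cj hj.
have hn : u ^+ (2 ^ n) = u by rewrite -hF expf_card.
have it : forall k m, u ^+ (2 ^ k) = u -> u ^+ (2 ^ (k * m)) = u.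
  move=> k m hk; elim: m => [|m IH]; first by rewrite muln0 expn0 expr1.
  by rewrite mulnS expnD exprM hk IH.
case: j cj hj => [|j] cj hj.
  move: cj; rewrite /coprime gcd0n => /eqP n1.
  by move: hn; rewrite n1.
have [a _ ha] := Bezoutl n (ltn0Sn j).
move: ha; rewrite (eqP cj) => /dvdnP [b hb].
have := it _ b hj.
rewrite [(j.+1 * b)%N]mulnC -hb expnD expn1 mulnC exprM mulnC it //.
Qed.

Arguments fixL {F n} hF {u j}.

Lemma idem01 (F : fieldType) (u : F) : u ^+ 2 = u -> u != 0 -> u = 1.
Proof. by move=> h u0; apply: (mulfI u0); rewrite mulr1 -expr2 h. Qed.
Arguments idem01 {F u}.

Theorem lemma15 (F : finFieldType) (n i : nat) (d : int) :
  odd n -> #|F| = (2 ^ n)%N -> (0 < i)%N -> coprime i n ->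
  (3 * d = (2 ^ i + 1)%N %[mod (2 ^ n - 1)%N])%Z ->
  forall u : F, u != 0 -> u != 1 ->
  exists! x : F, (u ^ d * x + (1 + u) ^ d) ^+ 3 + x ^+ 3 + 1 = 0.
Proof.
move=> on hF i0 cop hd u u0 u1.
have n0 : (0 < n)%N by case: n on hF cop hd.
have pc2 : (2 \in [pchar F])%R by apply: (card_finPcharP hF).
have h2 : (2%:R : F) = 0 := pcharf0 pc2.
pose m3 := ((2 ^ n.+1 - 1) %/ 3)%N.
have hq : (3 * m3 = 2 ^ n.+1 - 1)%N.
  rewrite /m3 mulnC divnK //.
  have e2 : n.+1 = (n.+1)./2.*2 by rewrite -[in LHS](odd_double_half n.+1) /= on.
  rewrite e2 -mul2n expnM -(eqn_mod_dvd 3 (expn_gt0 _ _ : (0 < 4 ^ _)%N)).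
  by rewrite -modnXm (_ : 4 %% 3 = 1)%N // exp1n.
have hc : forall x : F, (x ^+ 3) ^+ m3 = x.
  move=> x; rewrite -exprM hq.
  have hp : (0 < 2 ^ n.+1 - 1)%N.
    have : (0 < 2 ^ n)%N by rewrite expn_gt0.
    rewrite expnS; lia.
  have [->|x0] := eqVneq x 0; first by rewrite expr0n; case: (2 ^ n.+1 - 1)%N hp.
  have e3 : (2 ^ n.+1 - 1).+1 = (2 ^ n * 2)%N.
    have : (0 < 2 ^ n)%N by rewrite expn_gt0.
    rewrite expnSr; lia.
  apply: (mulIf x0); rewrite -exprSr e3 exprM -hF expf_card.
  by rewrite expr2.
have hmodF : forall x : F, x != 0 -> x ^+ (2 ^ n - 1) = 1.
  move=> x x0; apply: (mulfI x0); have : (0 < 2 ^ n)%N by rewrite expn_gt0.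
  move=> hp; rewrite mulr1 -exprS -subSn //.
  by rewrite subn1 /= -hF expf_card.
have hz : forall (x : F) (z : int), x != 0 ->
    x ^ z = x ^ (z %% (2 ^ n - 1)%N)%Z.
  move=> x z x0; rewrite {1}(divz_eq z (2 ^ n - 1)%N) expfzDr // mulrC -exprz_exp.
  rewrite (_ : (x ^ (z %/ (2 ^ n - 1)%N)%Z) ^ ((2 ^ n - 1)%N : int) =
     (x ^ (z %/ (2 ^ n - 1)%N)%Z) ^+ (2 ^ n - 1)) //.
  by rewrite hmodF ?expfz_neq0 // mulr1.
pose k := (2 ^ i)%N.
pose K := u ^+ k.
have u1' : 1 + u != 0.
  apply: contraNneq u1 => h.
  have : u = - 1 by apply: (addrI 1); rewrite subrr h.
  by rewrite (oppE h2) => ->.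
pose a := u ^ d.
pose b := (1 + u) ^ d.
have a0 : a != 0 by rewrite /a expfz_neq0.
have b0 : b != 0 by rewrite /b expfz_neq0.
have hpow : forall x : F, x != 0 -> (x ^ d) ^+ 3 = x ^+ k.+1.
  move=> x x0; have -> : (x ^ d) ^+ 3 = (x ^ d) ^ (Posz 3) by [].
  rewrite exprz_exp mulrC hz // hd -hz // /k addn1.
  by [].
have ha3 : a ^+ 3 = u * K by rewrite /a hpow // exprS mulrC.
have hb3 : b ^+ 3 = (1 + u) * (1 + K).
  by rewrite /b hpow // exprSr mulrC /K /k (frobn h2) expr1n.
have hK1 : u + K != 0.
  apply/negP => /eqP h.
  have hK : K = u by apply: (addrI u); rewrite h (addxx h2).
  by move: u1; rewrite (idem01 (fixL hF cop hK) u0) eqxx.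
have hK2 : u * K + 1 != 0.
  apply/negP => /eqP h.
  have huK : u * K = 1 by apply: (addIr 1); rewrite h (addxx h2).
  have K0 : K != 0 by apply: contra_eq_neq huK => ->; rewrite mulr0 eq_sym oner_neq0.
  have hKk : K ^+ k = u.
    have h1 : u ^+ k * K ^+ k = 1 by rewrite -exprMn huK expr1n.
    by apply: (mulfI K0); rewrite [RHS]mulrC huK -h1.
  have hu2 : u ^+ (2 ^ (i + i)) = u by rewrite expnD exprM.
  have cop2 : coprime (i + i) n by rewrite addnn -mul2n coprimeMl coprime2n on cop.
  by move: u1; rewrite (idem01 (fixL hF cop2 hu2) u0) eqxx.
pose e' := (u * K + (1 + u) * (1 + K) + 1) * (u * K + 1).
have e0 : e' != 0.
  rewrite /e' mulf_neq0 //.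
  have -> : u * K + (1 + u) * (1 + K) + 1 = u + K + 2%:R * (u * K + 1) by ring.
  by rewrite h2 mul0r addr0.
pose c' := a * b ^+ 2.
have c0 : c' != 0 by rewrite /c' mulf_neq0 // expf_neq0.
pose W := u * (1 + K) ^+ 2.
have hW : W ^+ 2 + e' * W + c' ^+ 3 = 0.
  have -> : c' ^+ 3 = a ^+ 3 * (b ^+ 3) ^+ 2 by rewrite /c'; ring.
  rewrite ha3 hb3.
  have -> : W ^+ 2 + e' * W + u * K * ((1 + u) * (1 + K)) ^+ 2 = 2%:R *
    (u + 3%:R*u*K + 3%:R*u*K^+2 + u*K^+3 + u^+2 + 6%:R*u^+2*K + 10%:R*u^+2*K^+2
     + 6%:R*u^+2*K^+3 + u^+2*K^+4 + u^+3*K + 3%:R*u^+3*K^+2 + 3%:R*u^+3*K^+3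
     + u^+3*K^+4) by rewrite /W /e'; ring.
  by rewrite h2 mul0r.
have [[z0 hz0] zuniq] := cubicL h2 hc c0 e0 hW.
have hC3 : a ^+ 3 + 1 != 0 by rewrite ha3.
pose Zf x := (a ^+ 3 + 1) * x + a ^+ 2 * b.
have hI : forall x, (a ^+ 3 + 1) ^+ 2 * ((a * x + b) ^+ 3 + x ^+ 3 + 1) =
    Zf x ^+ 3 + c' * Zf x + e'.
  move=> x.
  have -> : e' = (a ^+ 3 + b ^+ 3 + 1) * (a ^+ 3 + 1) by rewrite ha3 hb3.
  have -> : (a ^+ 3 + 1) ^+ 2 * ((a * x + b) ^+ 3 + x ^+ 3 + 1) =
     Zf x ^+ 3 + c' * Zf x + (a ^+ 3 + b ^+ 3 + 1) * (a ^+ 3 + 1)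
     + 2%:R * (a*b^+2*x + a^+4*b^+2*x) by rewrite /Zf /c'; ring.
  by rewrite h2 mul0r addr0.
rewrite -/a -/b.
exists ((z0 - a ^+ 2 * b) / (a ^+ 3 + 1)); split.
  have hZ : Zf ((z0 - a ^+ 2 * b) / (a ^+ 3 + 1)) = z0.
    by rewrite /Zf; field; exact: hC3.
  have := hI ((z0 - a ^+ 2 * b) / (a ^+ 3 + 1)); rewrite hZ hz0.
  by move/eqP; rewrite mulf_eq0 expf_eq0 (negbTE hC3) andbF /= => /eqP.
move=> x hx.
have hZ : Zf x = z0.
  by apply: zuniq => //; rewrite -hI hx mulr0.
rewrite -hZ /Zf; field; exact: hC3.
Qed.
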